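(* Let $f \in \mathrm{Inj}(\Omega)$ have at least one infinite cycle, and let $n \in \mathbb{Z}_+$. Then there is a transposition $h \in \mathrm{Fin}(\Omega)$ such that $(fh)\mathrm{C}_n = (f)\mathrm{C}_n + 1$ and $(fh)\mathrm{C}_m = (f)\mathrm{C}_m$ for all $m \in \mathbb{Z}_+ \setminus \{n\}$.
   Context: $\Omega$ is a countably infinite set; maps are written on the right and composed left to right. $\mathrm{Inj}(\Omega)$ is the monoid of injective maps $\Omega\to\Omega$; $\mathrm{Fin}(\Omega)$ the group of permutations moving only finitely many points. For $f\in\mathrm{Inj}(\Omega)$, a cycle of $f$ is a nonempty $\Sigma\subseteq\Omega$ such that (a) for all $\alpha\in\Omega$, $(\alpha)f\in\Sigma$ iff $\alpha\in\Sigma$, and (b) no proper nonempty subset of $\Sigma$ satisfies (a). For $n\in\mathbb{Z}_+$, $(f)\mathrm{C}_n$ is the cardinal number of cycles of $f$ of cardinality $n$ (cardinal arithmetic, so $\aleph_0+1=\aleph_0$). *)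

(* Defs.v *)
(* Sets of points are predicates Omega -> Prop; cardinal
   equalities of sets of cycles are expressed by explicit bijections. *)
From Stdlib Require Import List.
Import ListNotations.

(* Maps are written on the right and composed left to right:
   (x)(fh) = ((x)f)h, i.e. [comp f h x = h (f x)]. *)
Definition comp {O : Type} (f h : O -> O) : O -> O := fun x => h (f x).

Definition injective {O : Type} (f : O -> O) : Prop :=
  forall x y, f x = f y -> x = y.

Definition countably_infinite (O : Type) : Prop :=
  exists (e : nat -> O) (e' : O -> nat),
    (forall k, e' (e k) = k) /\ (forall x, e (e' x) = x).

Definition f_invariant {O : Type} (f : O -> O) (S : O -> Prop) : Prop :=
  forall a, S (f a) <-> S a.

Definition is_cycle {O : Type} (f : O -> O) (S : O -> Prop) : Prop :=
  (exists x, S x) /\ f_invariant f S /\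
  forall T : O -> Prop,
    (forall x, T x -> S x) -> (exists x, T x) -> f_invariant f T ->
    forall x, S x -> T x.

Definition has_card {O : Type} (S : O -> Prop) (n : nat) : Prop :=
  exists l : list O, NoDup l /\ length l = n /\ forall x, S x <-> In x l.

Definition is_finite {O : Type} (S : O -> Prop) : Prop :=
  exists l : list O, forall x, S x -> In x l.

(* The set of cycles of f of cardinality n; its cardinal is (f)C_n. *)
Definition cycles_of_size {O : Type} (f : O -> O) (n : nat) : Type :=
  { S : O -> Prop | is_cycle f S /\ has_card S n }.

Definition equipotent (A B : Type) : Prop :=
  exists (g : A -> B) (g' : B -> A),
    (forall a, g' (g a) = a) /\ (forall b, g (g' b) = b).

(* h is a transposition (a b) of Omega (hence h lies in Fin(Omega)). *)
Definition is_transposition {O : Type} (h : O -> O) : Prop :=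
  exists a b : O, a <> b /\ h a = b /\ h b = a /\
    forall x, x <> a -> x <> b -> h x = x.

(* Main.v *)
Require Import Defs.
From Stdlib Require Import List Lia Classical ClassicalEpsilon FunctionalExtensionality PropExtensionality ProofIrrelevance FinFun.
Import ListNotations.

Lemma inv_andnot {O} (g : O -> O) (A B : O -> Prop) : f_invariant g A -> f_invariant g B ->
  f_invariant g (fun x => A x /\ ~ B x).
Proof. intros HA HB x. specialize (HA x); specialize (HB x); tauto. Qed.

Lemma cycle_meet {O} (f : O -> O) (R S : O -> Prop) : is_cycle f R -> is_cycle f S ->
  (exists x, R x /\ S x) -> forall x, R x <-> S x.
Proof.
  intros [_ [HRi HRm]] [_ [HSi HSm]] [y [Ry Sy]].
  assert (Hi : f_invariant f (fun x => R x /\ S x)).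
  { intro z. specialize (HRi z); specialize (HSi z); tauto. }
  intro x; split; intro H.
  - destruct (HRm (fun x => R x /\ S x) ltac:(intros z [Hz1 Hz2]; assumption) ltac:(eauto) Hi x H); auto.
  - destruct (HSm (fun x => R x /\ S x) ltac:(intros z [Hz1 Hz2]; assumption) ltac:(eauto) Hi x H); auto.
Qed.

Lemma card_finite {O} (S : O -> Prop) m : has_card S m -> is_finite S.
Proof. intros [l [_ [_ H]]]. exists l. intros x Hx. apply H, Hx. Qed.

Lemma card_uniq {O} (R S : O -> Prop) m k : (forall x, R x <-> S x) ->
  has_card R m -> has_card S k -> m = k.
Proof.
  intros E [l [Nl [Ll Hl]]] [l' [Nl' [Ll' Hl']]].
  subst. apply PeanoNat.Nat.le_antisymm; apply NoDup_incl_length; auto; intros x Hx.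
  - apply Hl', E, Hl, Hx.
  - apply Hl, E, Hl', Hx.
Qed.

Lemma transfer {O} (f g : O -> O) (T R : O -> Prop) :
  f_invariant f T -> f_invariant g T -> (forall x, ~ T x -> g x = f x) ->
  (forall x, R x -> ~ T x) -> is_cycle f R -> is_cycle g R.
Proof.
  intros Tf Tg E D [Hne [Hi Hm]].
  assert (K : forall U, (forall x, U x -> ~ T x) -> f_invariant f U -> f_invariant g U).
  { intros U DU HU x. destruct (classic (T x)) as [Tx|Tx].
    - split; intro H.
      + exfalso. apply (DU _ H). apply (proj2 (Tg x)), Tx.
      + exfalso. exact (DU _ H Tx).
    - rewrite (E x Tx). apply HU. }
  assert (K' : forall U, (forall x, U x -> ~ T x) -> f_invariant g U -> f_invariant f U).
  { intros U DU HU x. destruct (classic (T x)) as [Tx|Tx].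
    - split; intro H.
      + exfalso. apply (DU _ H). apply (proj2 (Tf x)), Tx.
      + exfalso. exact (DU _ H Tx).
    - rewrite <- (E x Tx). apply HU. }
  split; [exact Hne|split].
  - apply K; auto.
  - intros U HUR HUne HUi. apply Hm; [exact HUR|exact HUne|]. apply K'; [intros x Ux; apply D, HUR, Ux | exact HUi].
Qed.

Lemma sig_ext {O} (P : (O -> Prop) -> Prop) (x y : {S | P S}) :
  (forall z, proj1_sig x z <-> proj1_sig y z) -> x = y.
Proof.
  destruct x as [X HX], y as [Y HY]; simpl; intro E.
  assert (X = Y) by (apply functional_extensionality; intro z; apply propositional_extensionality, E).
  subst. f_equal. apply proof_irrelevance.
Qed.

Lemma iter_in {O} (f : O -> O) T a : f_invariant f T -> T a -> forall k, T (Nat.iter k f a).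
Proof. intros Hi Ta k; induction k; simpl; auto. apply Hi; auto. Qed.

Lemma iter_cancel {O} (f : O -> O) a : injective f ->
  forall i j, Nat.iter i f a = Nat.iter (i + j) f a -> a = Nat.iter j f a.
Proof. intros Hf i; induction i; simpl; intros j H; [exact H| apply IHi, Hf, H]. Qed.

Lemma iter_dist {O} (f : O -> O) T a : injective f -> is_cycle f T -> ~ is_finite T -> T a ->
  forall i j, Nat.iter i f a = Nat.iter j f a -> i = j.
Proof.
  intros Hf [_ [Ti Tm]] Tinf Ta.
  assert (K : forall i k, Nat.iter i f a = Nat.iter (i + S k) f a -> False).
  { intros i k H. apply iter_cancel in H; auto.
    set (P := fun x => exists r, r < S k /\ x = Nat.iter r f a).
    assert (HP : f_invariant f P).
    { intro x; split.
      - intros [r [Hr Er]]. destruct r as [|r].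
        + simpl in Er. rewrite H in Er. simpl in Er. apply Hf in Er. exists k; split; [lia|auto].
        + simpl in Er. apply Hf in Er. exists r; split; [lia|auto].
      - intros [r [Hr Er]]. subst x. destruct (PeanoNat.Nat.eq_dec (S r) (S k)) as [E|E].
        + exists 0. split; [lia|]. injection E; intro; subst. simpl. symmetry; exact H.
        + exists (S r). split; [lia|reflexivity]. }
    assert (PT : forall x, P x -> T x). { intros x [r [_ ->]]. apply iter_in; auto. }
    apply Tinf. exists (map (fun r => Nat.iter r f a) (seq 0 (S k))).
    intros x Tx.
    assert (Px : P x).
    { apply (Tm P PT); [exists a; exists 0; split; [lia|reflexivity] | exact HP | exact Tx]. }
    destruct Px as [r [Hr ->]]. apply (in_map (fun r => Nat.iter r f a)). apply in_seq. lia. }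
  intros i j E. destruct (PeanoNat.Nat.lt_trichotomy i j) as [L|[L|L]]; auto.
  - exfalso. apply (K i (j - i - 1)). rewrite E. f_equal. lia.
  - exfalso. apply (K j (i - j - 1)). rewrite <- E. f_equal. lia.
Qed.

Definition swap {O} (a b x : O) : O :=
  if excluded_middle_informative (x = a) then b
  else if excluded_middle_informative (x = b) then a else x.

Lemma swap_a {O} (a b : O) : swap a b a = b.
Proof. unfold swap. destruct (excluded_middle_informative (a = a)); congruence. Qed.
Lemma swap_b {O} (a b : O) : a <> b -> swap a b b = a.
Proof. intro H. unfold swap. destruct (excluded_middle_informative (b = a)); [congruence|].
  destruct (excluded_middle_informative (b = b)); congruence. Qed.
Lemma swap_o {O} (a b x : O) : x <> a -> x <> b -> swap a b x = x.
Proof. intros H1 H2. unfold swap. destruct (excluded_middle_informative (x = a)); [congruence|].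
  destruct (excluded_middle_informative (x = b)); congruence. Qed.

Theorem mainTheorem9 (Omega : Type) (HOmega : countably_infinite Omega)
  (f : Omega -> Omega) (Hf : injective f)
  (Hinf : exists S : Omega -> Prop, is_cycle f S /\ ~ is_finite S)
  (n : nat) (Hn : 0 < n) :
  exists h : Omega -> Omega, is_transposition h /\
    (* (fh)C_n = (f)C_n + 1, with cardinal addition realised by [option] *)
    equipotent (cycles_of_size (comp f h) n) (option (cycles_of_size f n)) /\
    (forall m : nat, 0 < m -> m <> n ->
       equipotent (cycles_of_size (comp f h) m) (cycles_of_size f m)).
Proof.
  destruct Hinf as [T [HT Tinf]].
  pose proof HT as [[a Ta] [Tinv Tmin]].
  set (it := fun k => Nat.iter k f a).
  assert (Hd : forall i j, it i = it j -> i = j) by (apply (iter_dist f T a); auto).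
  assert (HiT : forall k, T (it k)) by (apply iter_in; auto).
  set (b := it n).
  assert (ab : a <> b). { intro E. pose proof (Hd 0 n E). lia. }
  set (g := comp f (swap a b)).
  assert (gx : forall x, g x = swap a b (f x)) by reflexivity.
  assert (itS : forall i, f (it i) = it (S i)) by reflexivity.
  assert (gS : forall i, S i < n -> g (it i) = it (S i)).
  { intros i Hi. rewrite gx, itS. apply swap_o.
    - intro E. pose proof (Hd (S i) 0 E). lia.
    - intro E. pose proof (Hd (S i) n E). lia. }
  assert (gL : g (it (n-1)) = a).
  { rewrite gx, itS. replace (S (n-1)) with n by lia. apply swap_b; auto. }
  assert (gT : forall x, ~ T x -> g x = f x).
  { intros x Tx. rewrite gx. apply swap_o; intro E; apply Tx; apply Tinv; rewrite E;
      [exact Ta| exact (HiT n)]. }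
  assert (swT : forall y, T (swap a b y) <-> T y).
  { intro y. unfold swap. destruct (excluded_middle_informative (y = a)) as [->|Ha].
    { split; intros; [exact Ta | exact (HiT n)]. }
    destruct (excluded_middle_informative (y = b)) as [->|Hb].
    { split; intros; [exact (HiT n) | exact Ta]. }
    tauto. }
  assert (Tg : f_invariant g T).
  { intro x. rewrite gx. pose proof (swT (f x)). pose proof (Tinv x). tauto. }
  set (C := fun x => exists i, i < n /\ x = it i).
  assert (Ca : C a) by (exists 0; split; [lia|reflexivity]).
  assert (CT : forall x, C x -> T x) by (intros x [i [_ ->]]; apply HiT).
  assert (Cinv : f_invariant g C).
  { intro x. split.
    - intros [j [Hj Ej]]. apply NNPP; intro nC.
      destruct (classic (f x = a)) as [Fa|Fa].
      + rewrite gx, Fa, swap_a in Ej. pose proof (Hd n j Ej). lia.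
      + destruct (classic (f x = b)) as [Fb|Fb].
        * apply nC. exists (n-1). split; [lia|]. apply Hf. rewrite Fb, itS. unfold b. f_equal; lia.
        * rewrite gx, swap_o in Ej by auto. destruct j as [|j].
          -- exact (Fa Ej).
          -- apply nC. exists j. split; [lia|]. apply Hf. rewrite Ej. reflexivity.
    - intros [i [Hi ->]]. destruct (PeanoNat.Nat.eq_dec (S i) n) as [E|E].
      + replace i with (n-1) by lia. rewrite gL. exact Ca.
      + rewrite gS by lia. exists (S i). split; [lia|reflexivity]. }
  assert (Ccyc : is_cycle g C).
  { split; [exists a; exact Ca|split; [exact Cinv|]].
    intros U UC [y Uy] Ui.
    destruct (UC y Uy) as [i [Hi ->]].
    assert (fw : forall j k, j + k < n -> U (it j) -> U (it (j + k))).
    { intros j k; induction k; intros Hk Uj. { rewrite PeanoNat.Nat.add_0_r; auto. }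
      replace (j + S k) with (S (j + k)) by lia. rewrite <- gS by lia. apply Ui. apply IHk; [lia|auto]. }
    assert (U0 : U a).
    { assert (U (it (n-1))) as Hn'.
      { replace (n-1) with (i + (n-1-i)) by lia. apply fw; [lia|auto]. }
      rewrite <- gL. apply Ui. exact Hn'. }
    intros x [j [Hj ->]]. apply (fw 0 j); [lia|exact U0]. }
  set (T' := fun x => T x /\ ~ C x).
  assert (T'inv : f_invariant g T') by (apply inv_andnot; auto).
  assert (bT' : T' b).
  { split; [apply HiT|]. intros [i [Hi Ei]]. pose proof (Hd n i Ei). lia. }
  assert (key : forall U, (forall x, U x -> T' x) -> f_invariant g U -> U b -> forall x, T' x -> U x).
  { intros U UT Ui Ub.
    set (V := fun x => U x \/ C x).
    assert (Vinv : f_invariant f V).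
    { intro x. destruct (classic (C x)) as [Cx|Cx].
      - split; intros _; [right; exact Cx|].
        destruct Cx as [i [Hi ->]]. destruct (PeanoNat.Nat.eq_dec (S i) n) as [E|E].
        + left. rewrite itS. rewrite E. exact Ub.
        + right. exists (S i). split; [lia|reflexivity].
      - destruct (classic (C (f x))) as [Cf|Cf].
        + destruct Cf as [j [Hj Ej]]. destruct j as [|j].
          * assert (U x).
            { apply Ui. rewrite gx, Ej. change (it 0) with a. rewrite swap_a. exact Ub. }
            split; intros; [left; auto | right; exists 0; split; [lia|exact Ej]].
          * exfalso. apply Cx. exists j. split; [lia|]. apply Hf. exact Ej.
        + assert (gfx : g x = f x).
          { rewrite gx. apply swap_o.
            - intro E; apply Cf; rewrite E; exact Ca.
            - intro E. apply Cx. exists (n-1). split; [lia|]. apply Hf. rewrite E, itS.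
              unfold b. f_equal; lia. }
          pose proof (Ui x) as Ux. rewrite gfx in Ux. unfold V. tauto. }
    assert (VT : forall x, V x -> T x).
    { intros x [Ux|Cx]; [apply (proj1 (UT x Ux))|apply CT; auto]. }
    intros x [Tx nCx].
    destruct (Tmin V VT (ex_intro _ a (or_intror Ca)) Vinv x Tx) as [Ux|Cx];
      [exact Ux|contradiction]. }
  assert (T'cyc : is_cycle g T').
  { split; [exists b; exact bT'|split; [exact T'inv|]].
    intros U UT [y Uy] Ui x Tx.
    destruct (classic (U b)) as [Ub|Ub]; [apply key; auto|].
    exfalso.
    set (W := fun x => T' x /\ ~ U x).
    assert (Winv : f_invariant g W) by (apply inv_andnot; auto).
    assert (Wy : W y).
    { apply (key W); [intros z [Hz _]; exact Hz | exact Winv | split; auto | apply UT, Uy]. }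
    destruct Wy; contradiction. }
  assert (T'inf : ~ is_finite T').
  { intros [l Hl]. apply Tinf. exists (l ++ map it (seq 0 n)). intros x Tx. apply in_or_app.
    destruct (classic (C x)) as [[i [Hi ->]]|Cx].
    - right. apply in_map; apply in_seq; lia.
    - left. apply Hl. split; auto. }
  assert (Ccard : has_card C n).
  { exists (map it (seq 0 n)). split; [|split].
    - apply FinFun.Injective_map_NoDup; [intros i j; apply Hd| apply seq_NoDup].
    - rewrite length_map, length_seq; reflexivity.
    - intro x; split.
      + intros [i [Hi ->]]. apply in_map; apply in_seq; lia.
      + intro H. apply in_map_iff in H. destruct H as [i [<- Hi]]. apply in_seq in Hi.
        exists i; split; [lia|reflexivity]. }
  assert (fdisj : forall R m, is_cycle f R -> has_card R m -> forall x, R x -> ~ T x).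
  { intros R m HR Hc x Rx Tx. apply Tinf. destruct (card_finite _ _ Hc) as [l Hl].
    exists l. intros z Tz. apply Hl.
    apply (proj2 (cycle_meet f R T HR HT (ex_intro _ x (conj Rx Tx)) z)), Tz. }
  assert (gdisj : forall R m, is_cycle g R -> has_card R m ->
            (exists x, R x /\ C x) \/ (forall x, R x -> ~ T x)).
  { intros R m HR Hc. destruct (classic (exists x, R x /\ C x)) as [H|H]; [left; exact H|right].
    intros x Rx Tx. assert (T'x : T' x). { split; auto. intro Cx; apply H; eauto. }
    apply T'inf. destruct (card_finite _ _ Hc) as [l Hl]. exists l. intros z Tz.
    apply Hl. apply (proj2 (cycle_meet g R T' HR T'cyc (ex_intro _ x (conj Rx T'x)) z)), Tz. }
  assert (fg : forall R m, is_cycle f R -> has_card R m -> is_cycle g R).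
  { intros R m HR Hc. apply (transfer f g T R Tinv Tg gT (fdisj R m HR Hc) HR). }
  assert (gf : forall R, (forall x, R x -> ~ T x) -> is_cycle g R -> is_cycle f R).
  { intros R D HR. apply (transfer g f T R Tg Tinv (fun x Tx => eq_sym (gT x Tx)) D HR). }
  exists (swap a b). split; [|split].
  - exists a, b. split; [exact ab|split; [apply swap_a|split; [apply swap_b; exact ab|]]].
    intros x H1 H2. apply swap_o; auto.
  - unshelve eexists.
    { intros [R [HR Hc]].
      destruct (excluded_middle_informative (exists x, R x /\ C x)) as [_|H].
      - exact None.
      - refine (Some (exist _ R (conj _ Hc))).
        apply (gf R); auto. destruct (gdisj R n HR Hc) as [H'|H']; [contradiction|exact H']. }
    unshelve eexists.
    { intros [R|].
      - exact (exist _ (proj1_sig R) (conj (fg _ _ (proj1 (proj2_sig R)) (proj2 (proj2_sig R)))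
                                         (proj2 (proj2_sig R)))).
      - exact (exist _ C (conj Ccyc Ccard)). }
    split.
    + intros [R [HR Hc]]. simpl.
      destruct (excluded_middle_informative (exists x, R x /\ C x)) as [H|H]; simpl.
      * apply sig_ext. simpl. intro z. symmetry. apply (cycle_meet g R C HR Ccyc H).
      * apply sig_ext; simpl; tauto.
    + intros [[R [HR Hc]]|]; simpl.
      * destruct (excluded_middle_informative (exists x, R x /\ C x)) as [H|H].
        -- exfalso. destruct H as [x [Rx Cx]]. apply (fdisj R n HR Hc x Rx). apply CT, Cx.
        -- f_equal. apply sig_ext; simpl; tauto.
      * destruct (excluded_middle_informative (exists x, C x /\ C x)) as [H|H]; [reflexivity|].
        exfalso. apply H. exists a. split; exact Ca.
  - intros m Hm Hmn. unshelve eexists.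
    { intros [R [HR Hc]]. refine (exist _ R (conj _ Hc)). apply (gf R); auto.
      destruct (gdisj R m HR Hc) as [H|H]; auto. exfalso. apply Hmn.
      destruct H as [x [Rx Cx]]. apply (card_uniq R C m n); auto.
      apply (cycle_meet g R C HR Ccyc); eauto. }
    unshelve eexists.
    { intros [R [HR Hc]]. exact (exist _ R (conj (fg R m HR Hc) Hc)). }
    split; intros [R [HR Hc]]; apply sig_ext; simpl; tauto.
Qed.
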